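(* Assume (A1)–(A4) below, and let $\varepsilon_\diamond$, $\alpha$, $\mathcal{E}_n$ be as below. Let $\tilde\Omega$ be the set of $\omega\in\Omega$ for which there exists $n_\omega\in\mathbb{N}_+$ with $\omega\in\mathcal{E}_n$ for all $n>n_\omega$. Let $\mathbf{a}_\star$ be the unique solution of $\mathrm{VI}(\mathbb{A},\mathbb{F})$. For any $\omega\in\tilde\Omega$ and any neighborhood $\mathcal{N}$ of $\mathbf{a}_\star$, there exists $N_\omega\in\mathbb{N}_+$ such that for all $n\ge N_\omega$ the unique solution $\mathbf{a}_{\omega,n}$ of $\mathrm{VI}(A_{\omega,n},\mathbf{F}_{\omega,n})$ satisfies $\mathbf{a}_{\omega,n}\in\mathcal{N}$. In particular $\lim_{n\to\infty}\|\mathbf{a}_{\omega,n}-\mathbf{a}_\star\|_2=0$.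
   Context: Setting. $(\Omega,\mathcal{F},\mathbb{P})$ is a probability space; $N,d\in\mathbb{N}_+$, $R>0$, $\lambda>0$. $\mathcal{X}\subseteq\mathbb{R}^{n_x}$, $\mathcal{Y}\subseteq\mathbb{R}^{n_y}$ are compact; $X:\Omega\to\mathcal{X}$, $Y:\Omega\to\mathcal{Y}$ are random variables. $\phi_1,\dots,\phi_d$ are continuous on $\mathcal{X}$, $\Phi^d(x)=[\phi_l(x)]_{l=1}^d$. $\mathbb{B}_R=\{a\in\mathbb{R}^d:\|a\|_2<R\}$, $\operatorname{cl}\mathbb{B}_R$ its closure, $\operatorname{cl}\mathbb{B}_R^N=\prod_{i=1}^N\operatorname{cl}\mathbb{B}_R\subseteq\mathbb{R}^{Nd}$. A profile $\mathbf{a}=[a^1;\dots;a^N]$, $a^i\in\mathbb{R}^d$, defines $\hat z^i(x)=\sum_l a^i_l\phi_l(x)$ and $\hat z^{-i}(x)$ (stack over $j\neq i$). $\hat{\mathcal{Z}}^i=\bigcup\{\hat z^i(\mathcal{X}):a^i\in\operatorname{cl}\mathbb{B}_R\}$, $\hat{\mathcal{Z}}=\prod_i\hat{\mathcal{Z}}^i$. Player $i$ has objective $J^i(z^i;y,z^{-i})$ (derivative $\partial J^i$ in $z^i$) and constraint $h^i:\hat{\mathcal{Z}}^i\times\mathcal{Y}\to\mathbb{R}$. $F(z;y)=[\partial J^i(z^i;y,z^{-i})]_i$; $\mathbf{F}(\mathbf{a};x,y)=[\partial J^i(\hat z^i(x);y,\hat z^{-i}(x))\Phi^d(x)]_i\in\mathbb{R}^{Nd}$;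 $\mathbb{F}^0(\mathbf{a})=\mathbb{E}[\mathbf{F}(\mathbf{a};X,Y)]$, $\mathbb{F}(\mathbf{a})=\mathbb{F}^0(\mathbf{a})+\lambda\mathbf{a}$; $\mathbf{h}^i(a^i;x,y)=h^i(\hat z^i(x);y)$; $\bar h^i(a^i)=\mathbb{E}[\mathbf{h}^i(a^i;X,Y)]$. $(X^k,Y^k)_{k\ge1}$ are i.i.d. copies of $(X,Y)$ on $\Omega$; $\mathbf{F}_{\omega,n}(\mathbf{a})=\frac1n\sum_{k=1}^n\mathbf{F}(\mathbf{a};X^k(\omega),Y^k(\omega))+\lambda\mathbf{a}$, $\mathbf{h}^i_{\omega,n}(a^i)=\frac1n\sum_{k=1}^n\mathbf{h}^i(a^i;X^k(\omega),Y^k(\omega))$. For $\varepsilon\in\mathbb{R}$: $\mathbb{A}^i_\varepsilon=\{a^i\in\operatorname{cl}\mathbb{B}_R:\bar h^i(a^i)\le\varepsilon\}$, $\mathbb{A}_\varepsilon=\prod_i\mathbb{A}^i_\varepsilon$, $\mathbb{A}=\mathbb{A}_0$; $A^i_{\omega,n}=\{a^i\in\operatorname{cl}\mathbb{B}_R:\mathbf{h}^i_{\omega,n}(a^i)\le0\}$, $A_{\omega,n}=\prod_iA^i_{\omega,n}$. For a closed convex set $K\subseteq\mathbb{R}^{Nd}$ and $G:\mathbb{R}^{Nd}\to\mathbb{R}^{Nd}$, $\mathrm{VI}(K,G)$ asks for $\mathbf{a}^*\in K$ with $\langle G(\mathbf{a}^* ),\mathbf{a}-\mathbf{a}^*\rangle\ge0$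 for all $\mathbf{a}\in K$. (A1) Each $J^i(\cdot;y,z^{-i})$ is continuously differentiable. (A2) For all $y$, $F(\cdot;y)$ is $L_F$-Lipschitz on $\hat{\mathcal{Z}}$ and each $h^i(\cdot;y)$ is $L_h$-Lipschitz on $\hat{\mathcal{Z}}^i$; some $z\in\hat{\mathcal{Z}}$ has $F(z;\mathcal{Y})$ and all $h^i(z^i;\mathcal{Y})$ bounded. (A3) For every $y$, $F(\cdot;y)$ is monotone on $\hat{\mathcal{Z}}$ ($\langle F(z_1;y)-F(z_2;y),z_1-z_2\rangle\ge0$) and each $h^i(\cdot;y)$ is convex on $\hat{\mathcal{Z}}^i$. (A4) There is $\varepsilon_h>0$ with $\{a^i\in\operatorname{cl}\mathbb{B}_R:\bar h^i(a^i)\le-\varepsilon_h\}\ne\varnothing$ for every $i$. The constant $\varepsilon_\diamond\in(0,\varepsilon_h)$: for every $\mathbf{a}\in\operatorname{cl}\mathbb{B}_R^N$, each centered random variable $W$ of the form $[\mathbf{F}(\mathbf{a};X,Y)]_l-[\mathbb{F}^0(\mathbf{a})]_l$ or $\mathbf{h}^i(a^i;X,Y)-\bar h^i(a^i)$, with variance $\sigma^2$, has rate function $I(u)=\sup_t\{tu-\log\mathbb{E}[e^{tW}]\}$ satisfying $I(u)\ge u^2/(3\sigma^2)$ for $0<u\le\varepsilon_\diamond$. Fix $0<\alpha<1/2$, $\varepsilon_n=\varepsilon_\diamond n^{-\alpha}$, and $\mathcal{E}_n=\{\omega:\|\mathbf{F}_{\omega,n}(\mathbf{a})-\mathbb{F}(\mathbf{a})\|_2<\varepsilon_n\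 \forall\mathbf{a}\in\operatorname{cl}\mathbb{B}_R^N\}\cap\{\omega:\mathbb{A}_{-\varepsilon_n}\subseteq A_{\omega,n}\subseteq\mathbb{A}_{\varepsilon_n}\}$. *)

(* Defs.v *)
From HB Require Import structures.
From mathcomp Require Import all_boot all_order all_algebra.
From mathcomp Require Import all_classical all_reals all_analysis.
Set Implicit Arguments. Unset Strict Implicit. Unset Printing Implicit Defensive.
Import Order.TTheory GRing.Theory Num.Theory.
Import numFieldNormedType.Exports.
Local Open Scope classical_set_scope.
Local Open Scope ring_scope.

Section Defs.
Variable R : realType.

Definition norm2 m n (A : 'M[R]_(m, n)) : R :=
  Num.sqrt (\sum_i \sum_j A i j ^+ 2).
Definition inner m n (A B : 'M[R]_(m, n)) : R :=
  \sum_i \sum_j A i j * B i j.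

Definition clBall d (Rr : R) (ai : 'rV[R]_d) : Prop := norm2 ai <= Rr.
Definition clBallN N d (Rr : R) (a : 'M[R]_(N, d)) : Prop :=
  forall i, clBall Rr (row i a).

Definition zi nx d (phi : 'I_d -> 'rV[R]_nx -> R) (ai : 'rV[R]_d) x : R :=
  \sum_l ai 0 l * phi l x.
Definition zhat nx N d (phi : 'I_d -> 'rV[R]_nx -> R) (a : 'M[R]_(N, d)) x
  : 'rV[R]_N := \row_i zi phi (row i a) x.

Definition Zi nx d (phi : 'I_d -> 'rV[R]_nx -> R) (Xs : set 'rV[R]_nx)
  (Rr : R) : set R :=
  [set t | exists ai x, clBall Rr ai /\ Xs x /\ t = zi phi ai x].
Definition Zset nx N d (phi : 'I_d -> 'rV[R]_nx -> R) (Xs : set 'rV[R]_nx)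
  (Rr : R) : set 'rV[R]_N := [set z | forall i, Zi phi Xs Rr (z 0 i)].

Definition upd N (z : 'rV[R]_N) (i : 'I_N) (t : R) : 'rV[R]_N :=
  \row_j (if j == i then t else z 0 j).

Definition Fz N ny (dJ : 'I_N -> 'rV[R]_N -> 'rV[R]_ny -> R) z y : 'rV[R]_N :=
  \row_i dJ i z y.

Definition Fb nx ny N d (dJ : 'I_N -> 'rV[R]_N -> 'rV[R]_ny -> R)
  (phi : 'I_d -> 'rV[R]_nx -> R) (a : 'M[R]_(N, d)) x y : 'M[R]_(N, d) :=
  \matrix_(i, l) (dJ i (zhat phi a x) y * phi l x).

Definition hb nx ny N d (h : 'I_N -> R -> 'rV[R]_ny -> R)
  (phi : 'I_d -> 'rV[R]_nx -> R) i (ai : 'rV[R]_d) x y : R :=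
  h i (zi phi ai x) y.

Definition vecof T n (X : 'I_n -> T -> R) (w : T) : 'rV[R]_n := \row_j X j w.

Context {dO : measure_display} {Omega : measurableType dO}.
Variable P : probability Omega R.

Definition Ex (f : Omega -> R) : R := fine (\int[P]_w (f w)%:E).

(* variance of a centered random variable W *)
Definition sigma2c (W : Omega -> R) : R := Ex (fun w => W w ^+ 2).

Definition rate (W : Omega -> R) (u : R) : \bar R :=
  ereal_sup [set ((t * u) - ln (Ex (fun w => expR (t * W w))))%:E | t in [set: R]].

Definition gen_copy nx ny (Xk : 'I_nx -> Omega -> R) (Yk : 'I_ny -> Omega -> R)
  : set (set Omega) :=
  <<s [set A | (exists j (B : set R), measurable B /\ A = Xk j @^-1` B) \/
               (exists j (B : set R), measurable B /\ A = Yk j @^-1` B)] >>.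

Definition indep_copies nx ny (Xs : nat -> 'I_nx -> Omega -> R)
  (Ys : nat -> 'I_ny -> Omega -> R) : Prop :=
  forall (s : seq nat) (E : nat -> set Omega), uniq s ->
    (forall k, k \in s -> gen_copy (Xs k) (Ys k) (E k)) ->
    P (\bigcap_(k in [set k | k \in s]) E k) = (\prod_(k <- s) P (E k))%E.

(* (X',Y') has the same joint law as (X,Y) (equality on measurable rectangles,
   which generate the Borel sigma-algebra of R^(nx+ny)) *)
Definition same_law nx ny (X X' : 'I_nx -> Omega -> R) (Y Y' : 'I_ny -> Omega -> R)
  : Prop :=
  forall (Bx : 'I_nx -> set R) (By : 'I_ny -> set R),
    (forall j, measurable (Bx j)) -> (forall j, measurable (By j)) ->
    P ((\bigcap_j (X' j @^-1` Bx j)) `&` (\bigcap_j (Y' j @^-1` By j))) =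
    P ((\bigcap_j (X j @^-1` Bx j)) `&` (\bigcap_j (Y j @^-1` By j))).

End Defs.

Section Problem.
Variable R : realType.
Context {dO : measure_display} {Omega : measurableType dO}.
Variable P : probability Omega R.
Variables (nx ny N d : nat).
Variables (phi : 'I_d -> 'rV[R]_nx -> R) (dJ : 'I_N -> 'rV[R]_N -> 'rV[R]_ny -> R)
  (h : 'I_N -> R -> 'rV[R]_ny -> R) (Rr lam : R).
Variables (X : 'I_nx -> Omega -> R) (Y : 'I_ny -> Omega -> R).
Variables (Xs : nat -> 'I_nx -> Omega -> R) (Ys : nat -> 'I_ny -> Omega -> R).

Definition FF0 (a : 'M[R]_(N, d)) : 'M[R]_(N, d) :=
  \matrix_(i, l) Ex P (fun w => Fb dJ phi a (vecof X w) (vecof Y w) i l).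
Definition FF (a : 'M[R]_(N, d)) : 'M[R]_(N, d) := FF0 a + lam *: a.

Definition hbar i (ai : 'rV[R]_d) : R :=
  Ex P (fun w => hb h phi i ai (vecof X w) (vecof Y w)).

(* empirical versions, the n samples being the copies indexed 0 .. n-1 *)
Definition Fn (n : nat) (w : Omega) (a : 'M[R]_(N, d)) : 'M[R]_(N, d) :=
  n%:R^-1 *: (\sum_(k < n) Fb dJ phi a (vecof (Xs k) w) (vecof (Ys k) w))
  + lam *: a.
Definition hn i (n : nat) (w : Omega) (ai : 'rV[R]_d) : R :=
  n%:R^-1 * \sum_(k < n) hb h phi i ai (vecof (Xs k) w) (vecof (Ys k) w).

Definition Aeps i (eps : R) : set 'rV[R]_d :=
  [set ai | clBall Rr ai /\ hbar i ai <= eps].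
Definition Aprod (S : 'I_N -> set 'rV[R]_d) : set 'M[R]_(N, d) :=
  [set a | forall i, S i (row i a)].
Definition Awn i n w : set 'rV[R]_d :=
  [set ai | clBall Rr ai /\ hn i n w ai <= 0].

Variables (epsd alpha : R).

Definition en (n : nat) : R := epsd * powR (n%:R) (- alpha).
Definition En (n : nat) (w : Omega) : Prop :=
  [/\ (forall a, clBallN Rr a -> norm2 (Fn n w a - FF a) < en n),
      (Aprod (fun i => Aeps i (- en n)) `<=` Aprod (fun i => Awn i n w)) &
      (Aprod (fun i => Awn i n w) `<=` Aprod (fun i => Aeps i (en n)))].

End Problem.

Definition rate_cond (R : realType) {dO : measure_display} {Omega : measurableType dO}
  (P : probability Omega R) (epsd : R) (W : Omega -> R) : Prop :=
  forall u, 0 < u <= epsd ->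
    ((u ^+ 2 / (3 * sigma2c P W))%:E <= rate P W u)%E.

Definition VI (R : realType) m n (K : set 'M[R]_(m, n))
  (G : 'M[R]_(m, n) -> 'M[R]_(m, n)) (a : 'M[R]_(m, n)) : Prop :=
  K a /\ forall b, K b -> 0 <= inner (G a) (b - a).

Definition convex_on (R : realType) (S : set R) (f : R -> R) : Prop :=
  forall x y t, S x -> S y -> 0 <= t <= 1 -> S (t * x + (1 - t) * y) ->
    f (t * x + (1 - t) * y) <= t * f x + (1 - t) * f y.

(* Main.v *)
Require Import Defs.
From HB Require Import structures.
From mathcomp Require Import all_boot all_order all_algebra.
From mathcomp Require Import all_classical all_reals all_analysis.
From mathcomp Require Import ring lra.
Import Order.TTheory GRing.Theory Num.Theory.
Import numFieldNormedType.Exports.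
Local Open Scope classical_set_scope.
Local Open Scope ring_scope.
Set Implicit Arguments. Unset Strict Implicit. Unset Printing Implicit Defensive.

Section Geom.
Variable R : realType.
Variables m n : nat.
Implicit Types A B C : 'M[R]_(m, n).

Lemma inner_sym A B : inner A B = inner B A.
Proof. by apply: eq_bigr => i _; apply: eq_bigr => j _; rewrite mulrC. Qed.

Lemma innerDl A B C : inner (A + B) C = inner A C + inner B C.
Proof.
rewrite /inner -big_split /=; apply: eq_bigr => i _.
rewrite -big_split /=; apply: eq_bigr => j _; rewrite !mxE; ring.
Qed.

Lemma innerZl k A C : inner (k *: A) C = k * inner A C.
Proof.
rewrite /inner mulr_sumr; apply: eq_bigr => i _.
rewrite mulr_sumr; apply: eq_bigr => j _; rewrite !mxE; ring.
Qed.

Lemma innerNl A C : inner (- A) C = - inner A C.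
Proof. by rewrite -scaleN1r innerZl mulN1r. Qed.

Lemma innerBl A B C : inner (A - B) C = inner A C - inner B C.
Proof. by rewrite innerDl innerNl. Qed.

Lemma innerDr A B C : inner C (A + B) = inner C A + inner C B.
Proof. by rewrite inner_sym innerDl !(inner_sym C). Qed.

Lemma innerZr k A C : inner C (k *: A) = k * inner C A.
Proof. by rewrite inner_sym innerZl inner_sym. Qed.

Lemma innerNr A C : inner C (- A) = - inner C A.
Proof. by rewrite inner_sym innerNl inner_sym. Qed.

Lemma innerBr A B C : inner C (A - B) = inner C A - inner C B.
Proof. by rewrite innerDr innerNr. Qed.

Lemma inner0l C : inner 0 C = 0.
Proof. by rewrite -(scale0r (0 : 'M[R]_(m,n))) innerZl mul0r. Qed.

Lemma inner0r C : inner C 0 = 0.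
Proof. by rewrite inner_sym inner0l. Qed.

Lemma inner_ge0 A : 0 <= inner A A.
Proof. by apply: sumr_ge0 => i _; apply: sumr_ge0 => j _; rewrite -expr2 sqr_ge0. Qed.

Lemma norm2_sq A : norm2 A ^+ 2 = inner A A.
Proof.
rewrite /norm2 sqr_sqrtr.
  by apply: eq_bigr => i _; apply: eq_bigr => j _; rewrite expr2.
by apply: sumr_ge0 => i _; apply: sumr_ge0 => j _; rewrite sqr_ge0.
Qed.

Lemma norm2_ge0 A : 0 <= norm2 A.
Proof. exact: sqrtr_ge0. Qed.

Lemma inner_eq0 A : inner A A = 0 -> A = 0.
Proof.
move=> H; apply/matrixP => i j; rewrite mxE.
have H2 : forall i j, 0 <= A i j * A i j by move=> *; rewrite -expr2 sqr_ge0.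
have H1 : forall i, 0 <= \sum_j A i j * A i j.
  by move=> i'; apply: sumr_ge0 => j' _.
have := psumr_eq0P (fun i _ => H1 i) H (i:=i) isT.
move/(psumr_eq0P (fun j _ => H2 i j))/(_ j isT)/eqP.
by rewrite mulf_eq0 orbb; move/eqP.
Qed.

Lemma norm2_eq0 A : norm2 A = 0 -> A = 0.
Proof. by move=> H; apply: inner_eq0; rewrite -norm2_sq H expr0n. Qed.

Lemma CS A B : inner A B <= norm2 A * norm2 B.
Proof.
set a := norm2 A; set b := norm2 B.
have [a0|ap] := eqVneq a 0.
  by rewrite (norm2_eq0 a0) inner0l a0 mul0r.
have [b0|bp] := eqVneq b 0.
  by rewrite (norm2_eq0 b0) inner0r b0 mulr0.
have ha : 0 < a by rewrite lt_def ap norm2_ge0.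
have hb : 0 < b by rewrite lt_def bp norm2_ge0.
have := inner_ge0 (b *: A - a *: B).
rewrite !innerBl !innerBr !innerZl !innerZr -!norm2_sq (inner_sym B A) -/a -/b.
move=> H.
have : 0 <= 2 * (a * b) * (a * b - inner A B) by nra.
rewrite pmulr_rge0 ?subr_ge0 //; by rewrite mulr_gt0 // mulr_gt0.
Qed.

Lemma CSabs A B : `|inner A B| <= norm2 A * norm2 B.
Proof.
rewrite ler_norml CS andbT lerNl -innerNl.
apply: le_trans (CS _ _) _; rewrite /norm2.
suff -> : \sum_i \sum_j (- A) i j ^+ 2 = \sum_i \sum_j A i j ^+ 2 by [].
by apply: eq_bigr => i _; apply: eq_bigr => j _; rewrite mxE sqrrN.
Qed.

Lemma norm2_le A c : 0 <= c -> inner A A <= c ^+ 2 -> norm2 A <= c.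
Proof.
move=> c0 H; rewrite -(ler_pXn2r (n:=2)) //; last exact: norm2_ge0.
by rewrite norm2_sq.
Qed.

Lemma norm2_lt A c : 0 < c -> inner A A < c ^+ 2 -> norm2 A < c.
Proof.
move=> c0 H; rewrite -(ltr_pXn2r (n:=2)) ?nnegrE ?norm2_ge0 ?(ltW c0) //.
by rewrite norm2_sq.
Qed.

Lemma norm2D A B : norm2 (A + B) <= norm2 A + norm2 B.
Proof.
apply: norm2_le; first by rewrite addr_ge0 // norm2_ge0.
rewrite innerDl !innerDr -!norm2_sq (inner_sym B A).
have := CS A B; nra.
Qed.

Lemma norm2Z k A : norm2 (k *: A) = `|k| * norm2 A.
Proof.
apply/eqP; rewrite -(eqrXn2 (n:=2)) ?norm2_ge0 ?mulr_ge0 ?norm2_ge0 //.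
by rewrite norm2_sq innerZl innerZr exprMn -norm2_sq real_normK ?num_real // mulrA expr2.
Qed.

Lemma norm2N A : norm2 (- A) = norm2 A.
Proof. by rewrite -scaleN1r norm2Z normrN normr1 mul1r. Qed.

Lemma norm2B A B : norm2 (A - B) = norm2 (B - A).
Proof. by rewrite -norm2N opprB. Qed.

Lemma norm2_0 : norm2 (0 : 'M[R]_(m,n)) = 0.
Proof. by rewrite -(scale0r (0 : 'M[R]_(m,n))) norm2Z normr0 mul0r. Qed.

Lemma norm2_sum I (r : seq I) (F : I -> 'M[R]_(m,n)) :
  norm2 (\sum_(k <- r) F k) <= \sum_(k <- r) norm2 (F k).
Proof.
elim: r => [|x r IH]; first by rewrite !big_nil norm2_0.
rewrite !big_cons; apply: le_trans (norm2D _ _) _; exact: lerD.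
Qed.

Lemma entry_le A i j : `|A i j| <= norm2 A.
Proof.
rewrite -(ler_pXn2r (n:=2)) ?nnegrE ?norm2_ge0 // norm2_sq real_normK ?num_real //.
rewrite /inner (bigD1 i) //= (bigD1 j) //= expr2 -addrA lerDl.
apply: addr_ge0; first by apply: sumr_ge0 => k _; rewrite -expr2 sqr_ge0.
by apply: sumr_ge0 => k _; apply: sumr_ge0 => l _; rewrite -expr2 sqr_ge0.
Qed.

Lemma inner_sqD A B : inner (A + B) (A + B) = inner A A + 2 * inner A B + inner B B.
Proof. rewrite innerDl !innerDr (inner_sym B A); ring. Qed.

Lemma inner_sqB A B : inner (A - B) (A - B) = inner A A - 2 * inner A B + inner B B.
Proof. rewrite inner_sqD innerNr innerNl innerNr opprK; ring. Qed.

End Geom.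

Set Implicit Arguments. Unset Strict Implicit. Unset Printing Implicit Defensive.

Section Exist.
Variable R : realType.
Variables m n : nat.
Local Notation M := 'M[R]_(m, n).

Definition nclosed (K : set M) := forall a,
  (forall e, 0 < e -> exists b, K b /\ norm2 (a - b) < e) -> K a.
Definition nbounded (K : set M) := exists C, forall a, K a -> norm2 a <= C.
Definition lipon (K : set M) (f : M -> R) L :=
  forall a b, K a -> K b -> `|f a - f b| <= L * norm2 (a - b).

Lemma entry_le_mx m' n' (A : 'M[R]_(m', n')) i j : `|A i j| <= `|A|.
Proof.
rewrite -[`|A|]/(mx_norm A) mx_normrE.
exact: (le_bigmax _ (fun ij : 'I_m' * 'I_n' => `|A ij.1 ij.2|) (i, j)).
Qed.

Lemma mx_le_norm2 m' n' (A : 'M[R]_(m', n')) : `|A| <= norm2 A.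
Proof.
rewrite -[`|_|]/(mx_norm _) mx_normrE.
apply: bigmax_le; first exact: norm2_ge0.
by move=> [i j] _; exact: entry_le.
Qed.

Lemma norm2_le_mx (A : M) : norm2 A <= ((m * n)%:R + 1) * `|A|.
Proof.
apply: norm2_le; first by rewrite mulr_ge0 // addr_ge0.
set c := `|A|.
have H : inner A A <= (m * n)%:R * c ^+ 2.
  rewrite /inner.
  have -> : (m * n)%:R * c ^+ 2 = \sum_(i < m) \sum_(j < n) c ^+ 2.
    by rewrite !sumr_const !card_ord -mulrnA mulr_natl mulnC.
  apply: ler_sum => i _; apply: ler_sum => j _.
  rewrite -expr2 -[X in X <= _]real_normK ?num_real // lerXn2r ?nnegrE //.
  exact: normr_ge0. exact: entry_le_mx.
apply: le_trans H _.
have c0 : 0 <= c by exact: normr_ge0.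
have k0 : 0 <= (m * n)%:R :> R by exact: ler0n.
set k := (m * n)%:R : R in k0 *.
nra.
Qed.

Lemma vec_mx_mxnorm (v : 'rV[R]_(m * n)) : `|vec_mx v| <= `|v|.
Proof.
rewrite -[`|_|]/(mx_norm _) mx_normrE.
apply: bigmax_le => // -[i j] _ /=; rewrite mxE.
exact: entry_le_mx.
Qed.

Lemma mxnorm_vec (v : 'rV[R]_(m * n)) : `|v| <= norm2 (vec_mx v).
Proof.
rewrite -[`|_|]/(mx_norm _) mx_normrE.
apply: bigmax_le; first exact: norm2_ge0.
move=> [i k] _ /=; rewrite (ord1 i).
case: (mxvec_indexP k) => a b.
have -> : v 0 (mxvec_index a b) = vec_mx v a b.
  by rewrite -{1}(vec_mxK v) mxvecE.
exact: entry_le.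
Qed.

Lemma min_exists (K : set M) (f : M -> R) L :
  K !=set0 -> nclosed K -> nbounded K -> lipon K f L ->
  exists2 a, K a & forall b, K b -> f a <= f b.
Proof.
move=> [a0 Ka0] Kc [C KC] fL.
set A' := [set v : 'rV[R]_(m * n) | K (vec_mx v)].
have A'0 : A' !=set0 by exists (mxvec a0); rewrite /A' /= mxvecK.
have cA' : compact A'.
  apply: bounded_closed_compact.
    exists C; split; first exact: num_real.
    move=> x Cx v Av; apply: le_trans (mxnorm_vec v) _.
    by apply: le_trans (KC _ Av) _; apply: ltW.
  move=> v clv; apply: Kc => e e0.
  set k := ((m * n)%:R + 1) : R.
  have k0 : 0 < k by rewrite /k ltr_wpDl.
  have [w [Aw vw]] : exists w, A' w /\ `|v - w| < e / k.
    have ek : 0 < e / k by rewrite divr_gt0.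
    have := clv (ball v (e / k)) (nbhsx_ballx _ _ ek).
    move=> [w [Aw bw]].
    exists w; split => //.
    by move: bw; rewrite -ball_normE /=.
  exists (vec_mx w); split => //.
  rewrite -linearB /=; apply: le_lt_trans (norm2_le_mx _) _.
  rewrite -ltr_pdivlMl // mulrC.
  by apply: le_lt_trans (vec_mx_mxnorm _) _.
have cf : {within A', continuous (f \o vec_mx)}.
  apply/subspace_continuousP => v Av.
  apply/cvgrPdist_le => e e0.
  rewrite near_withinE.
  set k := ((m * n)%:R + 1) : R.
  have k0 : 0 < k by rewrite /k ltr_wpDl.
  set L' := `|L| + 1.
  have L0 : 0 < L' by rewrite /L' ltr_pwDr.
  near=> w => Aw /=.
  have H := fL _ _ Av Aw.
  apply: le_trans H _.
  have H2 : L * norm2 (vec_mx v - vec_mx w) <= L' * norm2 (vec_mx v - vec_mx w).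
    apply: ler_wpM2r; first exact: norm2_ge0.
    by rewrite /L' (le_trans (ler_norm _)) // lerDl.
  apply: le_trans H2 _.
  rewrite -ler_pdivlMl // -linearB /=.
  apply: le_trans (norm2_le_mx _) _.
  rewrite -ler_pdivlMl //.
  apply: le_trans (vec_mx_mxnorm _) _.
  near: w.
  apply: cvgr_dist_le => //.
  by rewrite !mulr_gt0 // invr_gt0.
have [c Ac cmin] := EVT_min_rV A'0 cA' cf.
exists (vec_mx c); first by move: Ac; rewrite inE.
move=> b Kb; have := cmin (mxvec b); rewrite /= mxvecK; apply.
by rewrite inE /A' /= mxvecK.
Unshelve. all: by end_near.
Qed.

Definition cvx_set (K : set M) := forall a b t, K a -> K b -> 0 <= t <= 1 ->
  K (t *: a + (1 - t) *: b).

Lemma norm2_rev (a b : M) : `|norm2 a - norm2 b| <= norm2 (a - b).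
Proof.
have H1 : norm2 a <= norm2 (a - b) + norm2 b.
  by apply: le_trans (norm2D _ _); rewrite subrK.
have H2 : norm2 b <= norm2 (a - b) + norm2 a.
  by rewrite norm2B; apply: le_trans (norm2D _ _); rewrite subrK.
rewrite ler_norml; apply/andP; split; lra.
Qed.

Lemma proj_exists (K : set M) : K !=set0 -> nclosed K -> nbounded K ->
  cvx_set K -> forall x, exists p, K p /\ forall b, K b -> inner (x - p) (b - p) <= 0.
Proof.
move=> K0 Kc Kbd Kcv x.
have [|p Kp pmin] := @min_exists K (fun b => norm2 (b - x)) 1 K0 Kc Kbd.
  move=> a b _ _; rewrite mul1r; apply: le_trans (norm2_rev _ _) _.
  by rewrite opprB addrA subrK.
exists p; split => // b Kb.
set c := inner (x - p) (b - p); set q := inner (b - p) (b - p).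
have q0 : 0 <= q by apply: inner_ge0.
have key : forall t, 0 < t <= 1 -> 2 * c <= t * q.
  move=> t /andP[t0 t1].
  have Kt : K (t *: b + (1 - t) *: p) by apply: Kcv => //; rewrite (ltW t0) t1.
  have := pmin _ Kt.
  have E : t *: b + (1 - t) *: p - x = (p - x) + t *: (b - p).
    by apply/matrixP => i j; rewrite !mxE; ring.
  rewrite E => H.
  have : norm2 (p - x) ^+ 2 <= norm2 (p - x + t *: (b - p)) ^+ 2.
    by rewrite lerXn2r ?nnegrE ?norm2_ge0.
  rewrite !norm2_sq (inner_sqD (p - x) (t *: (b - p))) innerZr innerZl innerZr -/q.
    have -> : inner (p - x) (b - p) = - c by rewrite /c -innerNl opprB.
  move=> H3.
  have : 0 <= t * (t * q - 2 * c) by lra.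
  by rewrite pmulr_rge0 // subr_ge0.
rewrite leNgt; apply/negP => c0.
have t0 : 0 < c / (q + c) by rewrite divr_gt0 // ltr_wpDl.
have t1 : c / (q + c) <= 1 by rewrite ler_pdivrMr ?ltr_wpDl // mul1r lerDr.
have := key _ (introT andP (conj t0 t1)).
rewrite mulrAC ler_pdivlMr ?ltr_wpDl //.
nra.
Qed.

Definition VIsol (K : set M) (G : M -> M) a := K a /\ forall b, K b -> 0 <= inner (G a) (b - a).

Lemma VI_unique (K : set M) (G : M -> M) lam : 0 < lam ->
  (forall a b, K a -> K b -> lam * inner (a - b) (a - b) <= inner (G a - G b) (a - b)) ->
  forall a b, VIsol K G a -> VIsol K G b -> a = b.
Proof.
move=> l0 Hm a b [Ka Ha] [Kb Hb].
have h1 := Ha _ Kb; have h2 := Hb _ Ka.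
have h3 := Hm _ _ Ka Kb.
rewrite (innerBl (G a) (G b) (a - b)) in h3.
have e1 : inner (G b) (a - b) = - inner (G b) (b - a) by rewrite -innerNr opprB.
have e2 : inner (G a) (a - b) = - inner (G a) (b - a) by rewrite -innerNr opprB.
rewrite e1 e2 in h3.
have h4 := inner_ge0 (a - b).
have : inner (a - b) (a - b) = 0 by nra.
by move/inner_eq0/eqP; rewrite subr_eq0 => /eqP.
Qed.

Lemma VI_exists (K : set M) (G : M -> M) L lam :
  K !=set0 -> nclosed K -> nbounded K -> cvx_set K -> 0 < lam -> 0 < L ->
  (forall a b, K a -> K b -> norm2 (G a - G b) <= L * norm2 (a - b)) ->
  (forall a b, K a -> K b -> lam * inner (a - b) (a - b) <= inner (G a - G b) (a - b)) ->
  exists a, VIsol K G a.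
Proof.
move=> K0 Kc Kbd Kcv l0 L0 HL Hm.
have [pr Hpr] := choice (proj_exists K0 Kc Kbd Kcv).
have prK x : K (pr x) by case: (Hpr x).
have prV x b : K b -> inner (x - pr x) (b - pr x) <= 0 by case: (Hpr x) => _; apply.
have nonexp x y : norm2 (pr x - pr y) <= norm2 (x - y).
  set u := pr x - pr y.
  have h1 := prV x _ (prK y); have h2 := prV y _ (prK x).
  have S : inner (x - pr x) (pr y - pr x) + inner (y - pr y) (pr x - pr y)
      = inner u u - inner (x - y) u.
    have -> : pr y - pr x = - u by rewrite opprB.
    rewrite innerNr -innerNl -innerDl -innerBl; congr inner.
    by apply/matrixP => i j; rewrite !mxE; ring.
  have h3 := CS (x - y) u.
  rewrite -norm2_sq in S.
  have := norm2_ge0 u; have := norm2_ge0 (x - y).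
  nra.
set g := lam / L ^+ 2.
have g0 : 0 < g by rewrite divr_gt0 // exprn_gt0.
pose T a := pr (a - g *: G a).
set q2 := 1 - lam ^+ 2 / L ^+ 2.
have q21 : q2 < 1 by rewrite /q2 ltrBlDr ltrDl divr_gt0 // exprn_gt0.
have contr a b : K a -> K b -> norm2 (T a - T b) ^+ 2 <= q2 * norm2 (a - b) ^+ 2.
  move=> Ka Kb.
  have h1 : norm2 (T a - T b) ^+ 2 <= norm2 ((a - g *: G a) - (b - g *: G b)) ^+ 2.
    by rewrite lerXn2r ?nnegrE ?norm2_ge0 //; apply: nonexp.
  apply: le_trans h1 _.
  have -> : (a - g *: G a) - (b - g *: G b) = (a - b) - g *: (G a - G b).
    by apply/matrixP => i j; rewrite !mxE; ring.
  rewrite [X in X <= _]norm2_sq (inner_sqB (a - b) (g *: (G a - G b))) innerZr innerZl innerZr.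
  rewrite (inner_sym (a - b)) -!norm2_sq.
  have hm := Hm _ _ Ka Kb; rewrite -norm2_sq in hm.
  have hl := HL _ _ Ka Kb.
  have hl2 : norm2 (G a - G b) ^+ 2 <= L ^+ 2 * norm2 (a - b) ^+ 2.
    by rewrite -exprMn lerXn2r ?nnegrE ?norm2_ge0 ?mulr_ge0 ?(ltW L0) ?norm2_ge0.
  set d := norm2 (a - b) ^+ 2 in hm hl2 *.
  set e := inner (G a - G b) (a - b) in hm *.
  set s := norm2 (G a - G b) ^+ 2 in hl2 *.
  have -> : q2 * d = d - 2 * g * (lam * d) + g ^+ 2 * (L ^+ 2 * d).
    by rewrite /q2 /g; field; rewrite gt_eqF.
  have : g * (lam * d) <= g * e by rewrite ler_pM2l.
  have : g ^+ 2 * s <= g ^+ 2 * (L ^+ 2 * d) by rewrite ler_pM2l // exprn_gt0.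
  lra.
have Tl a b : K a -> K b -> norm2 (T a - T b) <= norm2 (a - b).
  move=> Ka Kb; have h := contr a b Ka Kb.
  rewrite -(ler_pXn2r (n:=2)) ?nnegrE ?norm2_ge0 //.
  apply: le_trans h _; rewrite ler_piMl ?sqr_ge0 //; exact: ltW.
have [|a0 Ka0 amin] := @min_exists K (fun a => norm2 (T a - a)) 2 K0 Kc Kbd.
  move=> a b Ka Kb; apply: le_trans (norm2_rev _ _) _.
  have -> : T a - a - (T b - b) = (T a - T b) - (a - b).
    by apply/matrixP => i j; rewrite !mxE; ring.
  apply: le_trans (norm2D _ _) _; rewrite norm2N.
  by have := Tl a b Ka Kb; lra.
set a1 := T a0.
have Ka1 : K a1 by apply: prK.
have h1 := amin _ Ka1.
have h2 := contr _ _ Ka1 Ka0.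
have ge1 := norm2_ge0 (T a1 - a1).
have ge0' := norm2_ge0 (T a0 - a0).
have e0 : norm2 (T a0 - a0) = 0.
  rewrite -/a1 in h1 ge0' *.
  set u := norm2 (a1 - a0) in h1 h2 ge0' *.
  set w := norm2 (T a1 - a1) in h1 h2 ge1 *.
  have w0 : w = 0.
    have u0 : 0 <= u by apply: norm2_ge0.
    have uw : u ^+ 2 <= w ^+ 2 by rewrite lerXn2r ?nnegrE.
    have : w ^+ 2 <= 0.
      case: (lerP 0 q2) => hq.
        have : q2 * u ^+ 2 <= q2 * w ^+ 2 by apply: ler_wpM2l.
        nra.
      have : q2 * u ^+ 2 <= 0 by rewrite nmulr_rle0 // sqr_ge0.
      lra.
    nra.
  by apply/eqP; rewrite eq_le ge0' andbT -w0.
have Tfix : T a0 = a0 by apply/eqP; rewrite -subr_eq0; apply/eqP; apply: norm2_eq0.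
exists a0; split => // b Kb.
have := prV (a0 - g *: G a0) _ Kb.
rewrite -/(T a0) Tfix.
have -> : a0 - g *: G a0 - a0 = (- g) *: G a0.
  by apply/matrixP => i j; rewrite !mxE; ring.
rewrite innerZl mulNr oppr_le0 pmulr_rge0 //.
Qed.

End Exist.

Set Implicit Arguments. Unset Strict Implicit. Unset Printing Implicit Defensive.

Section Main.
Variables (R : realType).
Variables (dO : measure_display).
Variables (Omega : measurableType dO).
Variables (P : probability Omega R).
Variables (N d nx ny : nat).
Variables (HN : (0 < N)%N).
Variables (Hd : (0 < d)%N).
Variables (Rr lam : R).
Variables (HR : 0 < Rr).
Variables (Hlam : 0 < lam).
Variables (Xset : set 'rV[R]_nx).
Variables (Yset : set 'rV[R]_ny).
Variables (HXc : compact Xset).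
Variables (HYc : compact Yset).
Variables (X : 'I_nx -> Omega -> R).
Variables (Y : 'I_ny -> Omega -> R).
Variables (HXm : forall j, measurable_fun setT (X j)).
Variables (HYm : forall j, measurable_fun setT (Y j)).
Variables (HXv : forall w, Xset (vecof X w)).
Variables (HYv : forall w, Yset (vecof Y w)).
Variables (phi : 'I_d -> 'rV[R]_nx -> R).
Variables (Hphi : forall l, {within Xset, continuous phi l}).
Variables (J dJ : 'I_N -> 'rV[R]_N -> 'rV[R]_ny -> R).
Variables (h : 'I_N -> R -> 'rV[R]_ny -> R).
Variables (HA1 : forall (i : 'I_N) (z : 'rV[R]_N) y, Yset y -> (forall t : R, is_derive t (1 : R) (fun s => J i (upd z i s) y) (dJ i (upd z i t) y)) /\ continuous (fun t => dJ i (upd z i t) y)).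
Variables (LF Lh : R).
Variables (HA2F : forall y, Yset y -> forall z1 z2 : 'rV[R]_N, Zset phi Xset Rr z1 -> Zset phi Xset Rr z2 -> norm2 (Fz dJ z1 y - Fz dJ z2 y) <= LF * norm2 (z1 - z2)).
Variables (HA2h : forall i y, Yset y -> forall t1 t2, Zi phi Xset Rr t1 -> Zi phi Xset Rr t2 -> `|h i t1 y - h i t2 y| <= Lh * `|t1 - t2|).
Variables (HA2b : exists z : 'rV[R]_N, Zset phi Xset Rr z /\ exists M : R, forall y, Yset y -> norm2 (Fz dJ z y) <= M /\ forall i, `|h i (z 0 i) y| <= M).
Variables (HA3F : forall y, Yset y -> forall z1 z2 : 'rV[R]_N, Zset phi Xset Rr z1 -> Zset phi Xset Rr z2 -> 0 <= inner (Fz dJ z1 y - Fz dJ z2 y) (z1 - z2)).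
Variables (HA3h : forall i y, Yset y -> convex_on (Zi phi Xset Rr) (fun t => h i t y)).
Variables (epsh : R).
Variables (Hepsh : 0 < epsh).
Variables (HA4 : forall i, exists ai, Aeps P phi h Rr X Y i (- epsh) ai).
Variables (Hmeas : forall a, clBallN Rr a -> (forall i l, measurable_fun setT (fun w => Fb dJ phi a (vecof X w) (vecof Y w) i l)) /\ (forall i, measurable_fun setT (fun w => hb h phi i (row i a) (vecof X w) (vecof Y w)))).
Variables (Xs : nat -> 'I_nx -> Omega -> R).
Variables (Ys : nat -> 'I_ny -> Omega -> R).
Variables (HXsm : forall k j, measurable_fun setT (Xs k j)).
Variables (HYsm : forall k j, measurable_fun setT (Ys k j)).
Variables (HXsv : forall k w, Xset (vecof (Xs k) w)).
Variables (HYsv : forall k w, Yset (vecof (Ys k) w)).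
Variables (Hindep : indep_copies P Xs Ys).
Variables (Hlaw : forall k, same_law P X (Xs k) Y (Ys k)).
Variables (epsd : R).
Variables (Hepsd : 0 < epsd < epsh).
Variables (Hrate : forall a, clBallN Rr a -> (forall i l, rate_cond P epsd (fun w => Fb dJ phi a (vecof X w) (vecof Y w) i l - FF0 P phi dJ X Y a i l)) /\ (forall i, rate_cond P epsd (fun w => hb h phi i (row i a) (vecof X w) (vecof Y w) - hbar P phi h X Y i (row i a)))).
Variables (alpha : R).
Variables (Halpha : 0 < alpha < 1 / 2).
Variables (astar : 'M[R]_(N, d)).
Variables (Hstar : VI (Aprod (fun i => Aeps P phi h Rr X Y i 0)) (FF P phi dJ lam X Y) astar).
Definition phirow x : 'rV[R]_d := \row_l phi l x.

Lemma norm2_entries m n (A : 'M[R]_(m, n)) c : 0 <= c ->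
  (forall i j, `|A i j| <= c) -> norm2 A <= ((m * n)%:R + 1) * c.
Proof.
move=> c0 HA.
apply: norm2_le; first by rewrite mulr_ge0 // addr_ge0.
have H : inner A A <= (m * n)%:R * c ^+ 2.
  rewrite /inner.
  have -> : (m * n)%:R * c ^+ 2 = \sum_(i < m) \sum_(j < n) c ^+ 2.
    by rewrite !sumr_const !card_ord -mulrnA mulr_natl mulnC.
  apply: ler_sum => i _; apply: ler_sum => j _.
  rewrite -expr2 -[X in X <= _]real_normK ?num_real // lerXn2r ?nnegrE ?normr_ge0 //.
apply: le_trans H _.
have k0 : 0 <= (m * n)%:R :> R by exact: ler0n.
set k := (m * n)%:R : R in k0 *.
nra.
Qed.

Lemma Phi_ex : exists Phi, 0 <= Phi /\ forall x, Xset x -> norm2 (phirow x) <= Phi.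
Proof.
have hB : forall l, exists B : R, forall x, Xset x -> `|phi l x| <= B.
  move=> l.
  have cI : compact (phi l @` Xset) by apply: continuous_compact.
  have [M [_ HM]] := compact_bounded cI.
  exists (`|M| + 1) => x Xx; apply: HM; last by exists x.
  by rewrite (le_lt_trans (ler_norm _)) // ltrDl.
have [B HB] := choice hB.
set c := \sum_l `|B l|.
have c0 : 0 <= c by apply: sumr_ge0.
exists (((1 * d)%:R + 1) * c); split; first by rewrite mulr_ge0 // addr_ge0.
move=> x Xx; apply: norm2_entries => // i j; rewrite mxE.
apply: le_trans (HB j x Xx) _.
rewrite /c (bigD1 j) //= (le_trans (ler_norm _)) // lerDl.
exact: sumr_ge0.
Qed.

Lemma inner_row1 m (u v : 'rV[R]_m) : inner u v = \sum_i u 0 i * v 0 i.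
Proof. by rewrite /inner big_ord1. Qed.

Lemma zi_inner ai x : zi phi ai x = inner ai (phirow x).
Proof. by rewrite inner_row1 /zi; apply: eq_bigr => l _; rewrite mxE. Qed.

Lemma zi_bound ai x : `|zi phi ai x| <= norm2 ai * norm2 (phirow x).
Proof. by rewrite zi_inner; apply: CSabs. Qed.

Lemma zi_lin ai bi t s x :
  zi phi (t *: ai + s *: bi) x = t * zi phi ai x + s * zi phi bi x.
Proof. by rewrite !zi_inner innerDl !innerZl. Qed.

Lemma zi_B ai bi x : zi phi (ai - bi) x = zi phi ai x - zi phi bi x.
Proof. by rewrite !zi_inner innerBl. Qed.

Lemma inner_rows m n (a b : 'M[R]_(m, n)) : inner a b = \sum_i inner (row i a) (row i b).
Proof. by apply: eq_bigr => i _; rewrite inner_row1; apply: eq_bigr => j _; rewrite !mxE. Qed.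

Lemma norm2_row m n (a : 'M[R]_(m, n)) i : norm2 (row i a) <= norm2 a.
Proof.
rewrite -(ler_pXn2r (n:=2)) ?nnegrE ?norm2_ge0 // !norm2_sq (inner_rows a a).
rewrite (bigD1 i) //= lerDl; apply: sumr_ge0 => j _; exact: inner_ge0.
Qed.

Lemma clBallN_bound (a : 'M[R]_(N, d)) : clBallN Rr a -> norm2 a <= N%:R * Rr.
Proof.
move=> Ha; apply: norm2_le; first by rewrite mulr_ge0 // ltW.
rewrite inner_rows.
have H : \sum_(i < N) inner (row i a) (row i a) <= N%:R * Rr ^+ 2.
  have -> : N%:R * Rr ^+ 2 = \sum_(i < N) Rr ^+ 2 by rewrite sumr_const card_ord mulr_natl.
  apply: ler_sum => i _; rewrite -norm2_sq lerXn2r ?nnegrE ?norm2_ge0 ?(ltW HR) //.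
  exact: Ha.
apply: le_trans H _.
have N1 : 1 <= N%:R :> R by rewrite ler1n.
rewrite exprMn ler_wpM2r ?sqr_ge0 // expr2 ler_peMl //; lra.
Qed.

Lemma zhat_entry (a : 'M[R]_(N, d)) x i : zhat phi a x 0 i = zi phi (row i a) x.
Proof. by rewrite mxE. Qed.

Lemma zhatB (a b : 'M[R]_(N, d)) x : zhat phi (a - b) x = zhat phi a x - zhat phi b x.
Proof.
apply/matrixP => k i; rewrite (ord1 k) !mxE -zi_B; congr zi.
by apply/matrixP => k' l; rewrite !mxE.
Qed.

Lemma norm2_zhat (a : 'M[R]_(N, d)) x : norm2 (zhat phi a x) <= norm2 a * norm2 (phirow x).
Proof.
apply: norm2_le; first by rewrite mulr_ge0 ?norm2_ge0.
rewrite inner_row1 exprMn !norm2_sq inner_rows mulr_suml.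
apply: ler_sum => i _; rewrite zhat_entry -expr2 -[X in X <= _]real_normK ?num_real //.
rewrite -!norm2_sq -exprMn lerXn2r ?nnegrE ?mulr_ge0 ?norm2_ge0 ?normr_ge0 //.
exact: zi_bound.
Qed.

Lemma Zi_bound Phi : (forall x, Xset x -> norm2 (phirow x) <= Phi) ->
  forall t, Zi phi Xset Rr t -> `|t| <= Rr * Phi.
Proof.
move=> HP t [ai [x [Ha [Xx ->]]]].
apply: le_trans (zi_bound _ _) _.
apply: ler_pM; [exact: norm2_ge0 | exact: norm2_ge0 | exact: Ha | exact: HP].
Qed.

Lemma Zset_bound Phi : 0 <= Phi -> (forall x, Xset x -> norm2 (phirow x) <= Phi) ->
  forall z : 'rV[R]_N, Zset phi Xset Rr z -> norm2 z <= ((1 * N)%:R + 1) * (Rr * Phi).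
Proof.
move=> P0 HP z Hz; apply: norm2_entries; first by rewrite mulr_ge0 // ltW.
by move=> k i; rewrite (ord1 k); apply: (Zi_bound HP); apply: Hz.
Qed.

Lemma zhat_Zset (a : 'M[R]_(N, d)) x : clBallN Rr a -> Xset x -> Zset phi Xset Rr (zhat phi a x).
Proof. by move=> Ha Xx i; rewrite zhat_entry; exists (row i a), x. Qed.

Lemma zi_Zi ai x : clBall Rr ai -> Xset x -> Zi phi Xset Rr (zi phi ai x).
Proof. by move=> Ha Xx; exists ai, x. Qed.

Definition outer (u : 'rV[R]_N) (v : 'rV[R]_d) : 'M[R]_(N, d) :=
  \matrix_(i, l) (u 0 i * v 0 l).

Lemma Fb_outer (a : 'M[R]_(N, d)) x y : Fb dJ phi a x y = outer (Fz dJ (zhat phi a x) y) (phirow x).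
Proof. by apply/matrixP => i l; rewrite !mxE. Qed.

Lemma outerB u u' v : outer u v - outer u' v = outer (u - u') v.
Proof. by apply/matrixP => i l; rewrite !mxE mulrBl. Qed.

Lemma norm2_outer u v : norm2 (outer u v) = norm2 u * norm2 v.
Proof.
apply/eqP; rewrite -(eqrXn2 (n:=2)) ?norm2_ge0 ?mulr_ge0 ?norm2_ge0 //.
rewrite exprMn !norm2_sq !inner_row1 /inner mulr_suml; apply/eqP.
apply: eq_bigr => i _; rewrite mulr_sumr; apply: eq_bigr => l _; rewrite !mxE; ring.
Qed.

Lemma inner_outer u x (c : 'M[R]_(N, d)) : inner (outer u (phirow x)) c = inner u (zhat phi c x).
Proof.
rewrite inner_row1 /inner; apply: eq_bigr => i _; rewrite zhat_entry /zi mulr_sumr.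
by apply: eq_bigr => l _; rewrite !mxE; ring.
Qed.

Definition Phi := sval (cid Phi_ex).
Lemma Phi_ge0 : 0 <= Phi. Proof. by case: (svalP (cid Phi_ex)). Qed.
Lemma Phi_bd x : Xset x -> norm2 (phirow x) <= Phi.
Proof. by case: (svalP (cid Phi_ex)) => _; apply. Qed.

Definition z0 := sval (cid HA2b).
Lemma z0_Z : Zset phi Xset Rr z0. Proof. by case: (svalP (cid HA2b)). Qed.
Lemma M0_ex : exists M : R, forall y, Yset y ->
  norm2 (Fz dJ z0 y) <= M /\ forall i, `|h i (z0 0 i) y| <= M.
Proof. by case: (svalP (cid HA2b)). Qed.
Definition M0 := sval (cid M0_ex).
Lemma M0_F y : Yset y -> norm2 (Fz dJ z0 y) <= M0.
Proof. by move=> Yy; case: (svalP (cid M0_ex) y Yy). Qed.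
Lemma M0_h y i : Yset y -> `|h i (z0 0 i) y| <= M0.
Proof. by move=> Yy; case: (svalP (cid M0_ex) y Yy) => _; apply. Qed.

Definition BZ := ((1 * N)%:R + 1) * (Rr * Phi).
Lemma BZ_bd (z : 'rV[R]_N) : Zset phi Xset Rr z -> norm2 z <= BZ.
Proof. exact: (Zset_bound Phi_ge0 Phi_bd). Qed.

Definition BF := M0 + `|LF| * (BZ + BZ).
Lemma BF_bd z y : Zset phi Xset Rr z -> Yset y -> norm2 (Fz dJ z y) <= BF.
Proof.
move=> Zz Yy.
have h1 : norm2 (Fz dJ z y) <= norm2 (Fz dJ z y - Fz dJ z0 y) + norm2 (Fz dJ z0 y).
  by apply: le_trans (norm2D _ _); rewrite subrK.
have h2 := HA2F Yy Zz z0_Z.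
have h3 : norm2 (z - z0) <= BZ + BZ.
  by apply: le_trans (norm2D _ _) _; rewrite norm2N; apply: lerD; apply: BZ_bd => //; exact: z0_Z.
have h4 : LF * norm2 (z - z0) <= `|LF| * (BZ + BZ).
  apply: (@le_trans _ _ (`|LF| * norm2 (z - z0))).
    by apply: ler_wpM2r; [exact: norm2_ge0 | exact: ler_norm].
  by apply: ler_wpM2l.
have := M0_F Yy; rewrite /BF; lra.
Qed.

Definition Bh := M0 + `|Lh| * (Rr * Phi + Rr * Phi).
Lemma Bh_bd i t y : Zi phi Xset Rr t -> Yset y -> `|h i t y| <= Bh.
Proof.
move=> Zt Yy.
have Z0 : Zi phi Xset Rr (z0 0 i) by apply: z0_Z.
have h2 := HA2h i Yy Zt Z0.
have h3 : `|t - z0 0 i| <= Rr * Phi + Rr * Phi.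
  apply: le_trans (ler_normB _ _) _; apply: lerD; apply: (Zi_bound Phi_bd) => //.
have h4 : Lh * `|t - z0 0 i| <= `|Lh| * (Rr * Phi + Rr * Phi).
  apply: (@le_trans _ _ (`|Lh| * `|t - z0 0 i|)).
    by apply: ler_wpM2r; [exact: normr_ge0 | exact: ler_norm].
  by apply: ler_wpM2l.
have h5 := M0_h i Yy.
have h6 : `|h i t y| <= `|h i t y - h i (z0 0 i) y| + `|h i (z0 0 i) y|.
  by apply: le_trans (ler_normD _ _); rewrite subrK.
rewrite /Bh; lra.
Qed.

Lemma Fb_bd a x y : clBallN Rr a -> Xset x -> Yset y -> norm2 (Fb dJ phi a x y) <= BF * Phi.
Proof.
move=> Ha Xx Yy; rewrite Fb_outer norm2_outer.
apply: ler_pM; try exact: norm2_ge0; last exact: Phi_bd.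
by apply: BF_bd => //; apply: zhat_Zset.
Qed.

Lemma Fb_lip a b x y : clBallN Rr a -> clBallN Rr b -> Xset x -> Yset y ->
  norm2 (Fb dJ phi a x y - Fb dJ phi b x y) <= `|LF| * Phi ^+ 2 * norm2 (a - b).
Proof.
move=> Ha Hb Xx Yy; rewrite !Fb_outer outerB norm2_outer.
have h1 := HA2F Yy (zhat_Zset Ha Xx) (zhat_Zset Hb Xx).
rewrite -zhatB in h1.
have h2 := norm2_zhat (a - b) x.
have h3 := Phi_bd Xx.
have g1 := norm2_ge0 (Fz dJ (zhat phi a x) y - Fz dJ (zhat phi b x) y).
have g2 := norm2_ge0 (phirow x).
have g3 := norm2_ge0 (zhat phi (a - b) x).
have g4 := norm2_ge0 (a - b).
have g5 := Phi_ge0.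
have h4 : LF * norm2 (zhat phi (a - b) x) <= `|LF| * norm2 (zhat phi (a - b) x).
  by apply: ler_wpM2r => //; exact: ler_norm.
have g6 := normr_ge0 LF.
set F1 := norm2 (Fz dJ _ y - _) in h1 g1 *.
set p := norm2 (phirow x) in h2 h3 g2 *.
set zz := norm2 (zhat phi (a - b) x) in h1 h2 g3 h4 *.
set ab := norm2 (a - b) in h2 g4 *.
set L := `|LF| in h4 g6 *.
have : F1 <= L * (ab * p) by apply: le_trans h1 (le_trans h4 _); apply: ler_wpM2l.
move=> e0.
have e1 : F1 * p <= L * (ab * p) * p by apply: ler_wpM2r.
have e2 : p * p <= Phi * Phi by apply: ler_pM.
have e3 : L * ab * (p * p) <= L * ab * (Phi * Phi) by apply: ler_wpM2l => //; apply: mulr_ge0.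
have -> : L * Phi ^+ 2 * ab = L * ab * (Phi * Phi) by ring.
apply: le_trans e1 _; apply: le_trans e3; rewrite le_eqVlt; apply/orP; left; apply/eqP; ring.
Qed.

Lemma Fb_mono a b x y : clBallN Rr a -> clBallN Rr b -> Xset x -> Yset y ->
  0 <= inner (Fb dJ phi a x y - Fb dJ phi b x y) (a - b).
Proof.
move=> Ha Hb Xx Yy; rewrite !Fb_outer outerB inner_outer zhatB.
exact (@HA3F _ Yy _ _ (zhat_Zset Ha Xx) (zhat_Zset Hb Xx)).
Qed.

Lemma inner_suml m n I (r : seq I) (F : I -> 'M[R]_(m, n)) C :
  inner (\sum_(k <- r) F k) C = \sum_(k <- r) inner (F k) C.
Proof.
elim: r => [|x r IH]; first by rewrite !big_nil inner0l.
by rewrite !big_cons innerDl IH.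
Qed.

Definition Fbk (w : Omega) (a : 'M[R]_(N, d)) k :=
  Fb dJ phi a (vecof (Xs k) w) (vecof (Ys k) w).

Lemma FnB n w a b : Fn phi dJ lam Xs Ys n w a - Fn phi dJ lam Xs Ys n w b =
  n%:R^-1 *: (\sum_(k < n) (Fbk w a k - Fbk w b k)) + lam *: (a - b).
Proof. by rewrite /Fn sumrB !scalerBr opprD addrACA. Qed.

Lemma nK (n : nat) c : (0 < n)%N -> n%:R^-1 * (n%:R * c) = c :> R.
Proof. by move=> n0; rewrite mulrA mulVf ?mul1r // pnatr_eq0 -lt0n. Qed.

Lemma Fn_lip n w a b : (0 < n)%N -> clBallN Rr a -> clBallN Rr b ->
  norm2 (Fn phi dJ lam Xs Ys n w a - Fn phi dJ lam Xs Ys n w b)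
  <= (`|LF| * Phi ^+ 2 + lam) * norm2 (a - b).
Proof.
move=> n0 Ha Hb; rewrite FnB; apply: le_trans (norm2D _ _) _.
rewrite !norm2Z (gtr0_norm Hlam) ger0_norm ?invr_ge0 ?ler0n // mulrDl lerD2r.
set c := `|LF| * Phi ^+ 2 * norm2 (a - b).
have H : \sum_(k < n) norm2 (Fbk w a k - Fbk w b k) <= n%:R * c.
  have -> : n%:R * c = \sum_(k < n) c by rewrite sumr_const card_ord mulr_natl.
  by apply: ler_sum => k _; apply: Fb_lip.
rewrite -(nK c n0); apply: ler_wpM2l; first by rewrite invr_ge0 ler0n.
exact: le_trans (norm2_sum _ _) H.
Qed.

Lemma Fn_mono n w a b : clBallN Rr a -> clBallN Rr b ->
  lam * inner (a - b) (a - b) <=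
  inner (Fn phi dJ lam Xs Ys n w a - Fn phi dJ lam Xs Ys n w b) (a - b).
Proof.
move=> Ha Hb; rewrite FnB [X in _ <= X]innerDl !innerZl lerDr inner_suml.
apply: mulr_ge0; first by rewrite invr_ge0 ler0n.
by apply: sumr_ge0 => k _; apply: Fb_mono.
Qed.

Lemma Fn_bd n w a : (0 < n)%N -> clBallN Rr a ->
  norm2 (Fn phi dJ lam Xs Ys n w a) <= BF * Phi + lam * (N%:R * Rr).
Proof.
move=> n0 Ha; rewrite /Fn; apply: le_trans (norm2D _ _) _.
rewrite !norm2Z (gtr0_norm Hlam) ger0_norm ?invr_ge0 ?ler0n //.
apply: lerD; last by apply: ler_wpM2l; [exact: ltW | exact: clBallN_bound].
have H : \sum_(k < n) norm2 (Fbk w a k) <= n%:R * (BF * Phi).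
  have -> : n%:R * (BF * Phi) = \sum_(k < n) (BF * Phi) by rewrite sumr_const card_ord mulr_natl.
  by apply: ler_sum => k _; apply: Fb_bd.
rewrite -(nK (BF * Phi) n0); apply: ler_wpM2l; first by rewrite invr_ge0 ler0n.
exact: le_trans (norm2_sum _ _) H.
Qed.

Lemma clBall_convex (a b : 'rV[R]_d) t : clBall Rr a -> clBall Rr b -> 0 <= t <= 1 ->
  clBall Rr (t *: a + (1 - t) *: b).
Proof.
move=> Ha Hb /andP[t0 t1]; rewrite /clBall.
apply: le_trans (norm2D _ _) _; rewrite !norm2Z (ger0_norm t0) ger0_norm ?subr_ge0 //.
have : t * norm2 a <= t * Rr by apply: ler_wpM2l.
have : (1 - t) * norm2 b <= (1 - t) * Rr by apply: ler_wpM2l; rewrite ?subr_ge0.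
lra.
Qed.

Lemma le_eps0 (x C : R) : 0 <= C -> (forall e, 0 < e -> x <= C * e) -> x <= 0.
Proof.
move=> C0 H; apply/ler_addgt0Pr => e e0; rewrite add0r.
have C1 : 0 < C + 1 by rewrite ltr_wpDl.
apply: le_trans (H (e / (C + 1)) _) _; first by rewrite divr_gt0.
rewrite mulrA ler_pdivrMr //; nra.
Qed.

Lemma hn_lip i n w (a b : 'rV[R]_d) : (0 < n)%N -> clBall Rr a -> clBall Rr b ->
  `|hn phi h Xs Ys i n w a - hn phi h Xs Ys i n w b| <= `|Lh| * Phi * norm2 (a - b).
Proof.
move=> n0 Ha Hb; rewrite /hn -mulrBr -sumrB normrM ger0_norm ?invr_ge0 ?ler0n //.
rewrite -(nK (`|Lh| * Phi * norm2 (a - b)) n0); apply: ler_wpM2l; first by rewrite invr_ge0 ler0n.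
apply: le_trans (ler_norm_sum _ _ _) _.
rewrite -[X in _ <= X](_ : \sum_(k < n) (`|Lh| * Phi * norm2 (a - b)) = _); last first.
  by rewrite sumr_const card_ord mulr_natl.
apply: ler_sum => k _; rewrite /hb.
set x := vecof (Xs k) w; set y := vecof (Ys k) w.
have Xx : Xset x by apply: HXsv.
have Yy : Yset y by apply: HYsv.
have h1 := HA2h i Yy (zi_Zi Ha Xx) (zi_Zi Hb Xx).
apply: le_trans h1 _.
have h2 : `|zi phi a x - zi phi b x| <= norm2 (a - b) * Phi.
  rewrite -zi_B; apply: le_trans (zi_bound _ _) _; apply: ler_wpM2l; [exact: norm2_ge0|exact: Phi_bd].
have h3 : Lh * `|zi phi a x - zi phi b x| <= `|Lh| * `|zi phi a x - zi phi b x|.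
  by apply: ler_wpM2r; [exact: normr_ge0 | exact: ler_norm].
apply: le_trans h3 _; rewrite -mulrA; apply: ler_wpM2l => //; by rewrite mulrC.
Qed.

Lemma hn_convex i n w (a b : 'rV[R]_d) t : clBall Rr a -> clBall Rr b -> 0 <= t <= 1 ->
  hn phi h Xs Ys i n w (t *: a + (1 - t) *: b) <=
  t * hn phi h Xs Ys i n w a + (1 - t) * hn phi h Xs Ys i n w b.
Proof.
move=> Ha Hb /andP[t0 t1]; rewrite /hn mulrCA [X in _ <= _ + X]mulrCA -mulrDr.
apply: ler_wpM2l; first by rewrite invr_ge0 ler0n.
rewrite !mulr_sumr -big_split /=; apply: ler_sum => k _; rewrite /hb zi_lin.
set x := vecof (Xs k) w; set y := vecof (Ys k) w.
have Xx : Xset x by apply: HXsv.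
have Yy : Yset y by apply: HYsv.
apply: (HA3h i Yy); try (by apply: zi_Zi); first by rewrite t0 t1.
rewrite -zi_lin; apply: zi_Zi => //; apply: clBall_convex => //; by rewrite t0 t1.
Qed.

Definition Kn n w := Aprod (fun i => Awn phi h Rr Xs Ys i n w).

Lemma row_comb (a b : 'M[R]_(N, d)) t s i :
  row i (t *: a + s *: b) = t *: row i a + s *: row i b.
Proof. by apply/matrixP => k l; rewrite !mxE. Qed.

Lemma row_B (a b : 'M[R]_(N, d)) i : row i (a - b) = row i a - row i b.
Proof. by apply/matrixP => k l; rewrite !mxE. Qed.

Lemma Kn_sub n w a : Kn n w a -> clBallN Rr a.
Proof. by move=> H i; case: (H i). Qed.

Lemma Kn_convex n w : cvx_set (Kn n w).
Proof.
move=> a b t Ha Hb t01 i; rewrite /Awn /= row_comb; case: (Ha i) => ha1 ha2; case: (Hb i) => hb1 hb2.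
split; first exact: clBall_convex.
apply: le_trans (hn_convex _ _ _ ha1 hb1 t01) _.
case/andP: t01 => t0 t1.
have : t * hn phi h Xs Ys i n w (row i a) <= 0 by rewrite mulr_ge0_le0.
have : (1 - t) * hn phi h Xs Ys i n w (row i b) <= 0 by rewrite mulr_ge0_le0 ?subr_ge0.
lra.
Qed.

Lemma Kn_bounded n w : nbounded (Kn n w).
Proof. by exists (N%:R * Rr) => a Ha; apply: clBallN_bound; apply: Kn_sub Ha. Qed.

Lemma Kn_closed n w : (0 < n)%N -> nclosed (Kn n w).
Proof.
move=> n0 a Ha i.
have cB : clBall Rr (row i a).
  rewrite /clBall; apply/ler_addgt0Pr => e e0.
  have [b [Kb ab]] := Ha e e0.
  have := norm2D (row i b) (row i a - row i b); rewrite addrC subrK => h1.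
  apply: le_trans h1 _; apply: lerD; first by case: (Kb i).
  by rewrite -row_B; apply: ltW; apply: le_lt_trans (norm2_row _ _) ab.
split => //.
apply: (@le_eps0 _ (`|Lh| * Phi)); first by rewrite mulr_ge0 ?Phi_ge0.
move=> e e0.
have [b [Kb ab]] := Ha e e0.
case: (Kb i) => hb1 hb2.
have := hn_lip i w n0 cB hb1; rewrite -row_B => h1.
have h2 : norm2 (row i (a - b)) <= e by apply: ltW; apply: le_lt_trans (norm2_row _ _) ab.
have h3 : `|Lh| * Phi * norm2 (row i (a - b)) <= `|Lh| * Phi * e.
  by apply: ler_wpM2l => //; rewrite mulr_ge0 ?Phi_ge0.
move: h1; rewrite ler_norml => /andP[_ h1].
lra.
Qed.

Definition intg (f : Omega -> R) := P.-integrable setT (EFin \o f).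

Lemma Ex_le f g : intg f -> intg g -> (forall w, f w <= g w) -> Ex P f <= Ex P g.
Proof.
move=> If Ig fg; rewrite /Ex; apply: fine_le.
- exact: integrable_fin_num.
- exact: integrable_fin_num.
- by apply: le_integral => // w _; rewrite lee_fin.
Qed.

Lemma Ex_comb f g t s : intg f -> intg g ->
  Ex P (fun w => t * f w + s * g w) = t * Ex P f + s * Ex P g.
Proof.
move=> If Ig; rewrite /Ex.
have -> : (fun w => (t * f w + s * g w)%:E) = (fun w => (t%:E * (f w)%:E) + (s%:E * (g w)%:E))%E.
  by apply: funext => w; rewrite EFinD !EFinM.
rewrite integralD //; try by apply: integrableZl.
rewrite !integralZl //.
have F1 := integrable_fin_num measurableT If.
have F2 := integrable_fin_num measurableT Ig.
rewrite fineD ?fin_numM // !fineM //.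
Qed.

Lemma hb_intg i (a : 'rV[R]_d) : clBall Rr a ->
  intg (fun w => hb h phi i a (vecof X w) (vecof Y w)).
Proof.
move=> Ha.
set A := \matrix_(j, l) a 0 l : 'M[R]_(N, d).
have rA j : row j A = a by apply/matrixP => k l; rewrite !mxE (ord1 k).
have HA : clBallN Rr A by move=> j; rewrite rA.
have [_ Hm] := Hmeas HA.
have := Hm i; rewrite rA => mf.
apply: measurable_bounded_integrable => //.
  by apply: (le_lt_trans (probability_le1 P measurableT)); rewrite ltry.
exists Bh; split; first exact: num_real.
move=> M HM w _; apply: le_trans (ltW HM); rewrite /hb.
by apply: Bh_bd; [apply: zi_Zi | apply: HYv].
Qed.

Lemma hbar_convex i (a b : 'rV[R]_d) t : clBall Rr a -> clBall Rr b -> 0 <= t <= 1 ->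
  hbar P phi h X Y i (t *: a + (1 - t) *: b) <=
  t * hbar P phi h X Y i a + (1 - t) * hbar P phi h X Y i b.
Proof.
move=> Ha Hb t01; rewrite /hbar -Ex_comb; try exact: hb_intg.
apply: Ex_le.
- by apply: hb_intg; apply: clBall_convex.
- have I1 := integrableZl measurableT t (hb_intg i Ha).
  have I2 := integrableZl measurableT (1 - t) (hb_intg i Hb).
  have I3 := integrableD measurableT I1 I2.
  apply: eq_integrable I3 => // w _.
move=> w; rewrite /hb zi_lin.
have Xx := HXv w; have Yy := HYv w.
case/andP: t01 => t0 t1.
apply: (HA3h i Yy); try (by apply: zi_Zi); first by rewrite t0 t1.
rewrite -zi_lin; apply: zi_Zi => //; apply: clBall_convex => //; by rewrite t0 t1.
Qed.

Definition sf := projT1 (choice HA4).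
Lemma sf_A i : Aeps P phi h Rr X Y i (- epsh) (sf i).
Proof. exact: (projT2 (choice HA4) i). Qed.
Definition smat : 'M[R]_(N, d) := \matrix_(i, l) sf i 0 l.
Lemma row_smat i : row i smat = sf i.
Proof. by apply/matrixP => k l; rewrite !mxE (ord1 k). Qed.
Lemma smat_ball : clBallN Rr smat.
Proof. by move=> i; rewrite row_smat; case: (sf_A i). Qed.

Definition NR := N%:R * Rr.
Definition DD := NR + NR.
Lemma diff_bd (x y : 'M[R]_(N, d)) : clBallN Rr x -> clBallN Rr y -> norm2 (x - y) <= DD.
Proof.
move=> Hx Hy; apply: le_trans (norm2D _ _) _; rewrite norm2N.
by apply: lerD; apply: clBallN_bound.
Qed.
Definition BG := BF * Phi + lam * NR.
Definition FA := norm2 (FF P phi dJ lam X Y astar).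
Definition C0 := DD * (BG / epsh + 1 + FA / epsh).

Lemma astar_ball : clBallN Rr astar.
Proof. by case: Hstar => H _ i; case: (H i). Qed.

Lemma DD_ge0 : 0 <= DD.
Proof. by apply: le_trans (diff_bd astar_ball astar_ball); exact: norm2_ge0. Qed.

Lemma C0_ge0 : 0 <= BG -> 0 <= C0.
Proof.
move=> BG0; rewrite /C0; apply: mulr_ge0; first exact: DD_ge0.
have e0 : 0 <= epsh^-1 by rewrite invr_ge0 ltW.
apply: addr_ge0; first apply: addr_ge0 => //; apply: mulr_ge0 => //.
exact: norm2_ge0.
Qed.

Lemma key_est n w a : (0 < n)%N ->
  En P phi dJ h Rr lam X Y Xs Ys epsd alpha n w ->
  0 < en epsd alpha n -> en epsd alpha n < epsh ->
  VI (Kn n w) (Fn phi dJ lam Xs Ys n w) a ->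
  lam * norm2 (a - astar) ^+ 2 <= en epsd alpha n * C0.
Proof.
move=> n0 [E1 E2 E3] e0 eh [Kna Hvn].
set e := en epsd alpha n in e0 eh E1 E2 E3 *.
case: Hstar => Ka Hva.
have hp : 0 < epsh := Hepsh.
have aB : clBallN Rr a := Kn_sub Kna.
have sB := smat_ball.
have asB := astar_ball.
set G := Fn phi dJ lam Xs Ys n w.
set tau := e / epsh.
have tau0 : 0 < tau by rewrite divr_gt0.
have tau1 : tau < 1 by rewrite ltr_pdivrMr // mul1r.
set c := (1 - tau) *: astar + (1 - (1 - tau)) *: smat.
have t01 : 0 <= 1 - tau <= 1 by apply/andP; split; lra.
have Kc : Kn n w c.
  apply: E2 => i; rewrite /Aeps /c row_comb; split.
    by apply: clBall_convex => //.
  apply: le_trans (hbar_convex _ _ _ t01) _.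
  - by case: (Ka i).
  - by rewrite row_smat; case: (sf_A i).
  case: (Ka i) => _ h1; rewrite row_smat; case: (sf_A i) => _ h2.
  have : (1 - tau) * hbar P phi h X Y i (row i astar) <= 0 by rewrite mulr_ge0_le0 //; lra.
  have : (1 - (1 - tau)) * hbar P phi h X Y i (sf i) <= (1 - (1 - tau)) * (- epsh).
    by apply: ler_wpM2l => //; lra.
  have -> : (1 - (1 - tau)) * - epsh = - e by rewrite /tau; field; rewrite gt_eqF.
  lra.
set sig := e / (e + epsh).
have sig0 : 0 < sig by rewrite divr_gt0 // addr_gt0.
have sig1 : sig < 1 by rewrite ltr_pdivrMr ?addr_gt0 // mul1r ltrDl.
have sigt : sig <= tau.
  rewrite /sig /tau ler_pdivrMr ?addr_gt0 // mulrAC ler_pdivlMr //.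
  by rewrite ler_pM2l // lerDr ltW.
set a' := (1 - sig) *: a + (1 - (1 - sig)) *: smat.
have s01 : 0 <= 1 - sig <= 1 by apply/andP; split; lra.
have Ka' : Aprod (fun i => Aeps P phi h Rr X Y i 0) a'.
  move=> i; rewrite /Aeps /a' row_comb; split.
    by apply: clBall_convex => //.
  apply: le_trans (hbar_convex _ _ _ s01) _.
  - exact: aB.
  - by rewrite row_smat; case: (sf_A i).
  have [_ h1] := E3 _ Kna i; rewrite row_smat; case: (sf_A i) => _ h2.
  have : (1 - sig) * hbar P phi h X Y i (row i a) <= (1 - sig) * e by apply: ler_wpM2l => //; lra.
  have : (1 - (1 - sig)) * hbar P phi h X Y i (sf i) <= (1 - (1 - sig)) * (- epsh).
    by apply: ler_wpM2l => //; lra.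
  have : (1 - sig) * e + (1 - (1 - sig)) * - epsh = 0.
    by rewrite /sig; field; rewrite gt_eqF // addr_gt0.
  lra.
have m1 := Fn_mono n w aB asB.
have v1 := Hvn c Kc.
have v2 := Hva a' Ka'.
have b1 := E1 astar asB.
have ca : c - astar = tau *: (smat - astar).
  by apply/matrixP => i j; rewrite !mxE; ring.
have a'a : a' - a = sig *: (smat - a).
  by apply/matrixP => i j; rewrite !mxE; ring.
have i1 : inner (G a - G astar) (a - astar) =
    inner (G a) (c - astar) - inner (G a) (c - a) + inner (FF P phi dJ lam X Y astar - G astar) (a - astar)
    + inner (FF P phi dJ lam X Y astar) (a' - a) - inner (FF P phi dJ lam X Y astar) (a' - astar).
  rewrite !(innerBl, innerBr); ring.
have j1 : inner (G a) (c - astar) <= BG * (tau * DD).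
  apply: le_trans (CS _ _) _; apply: ler_pM; try exact: norm2_ge0.
    exact: Fn_bd.
  rewrite ca norm2Z gtr0_norm //; apply: ler_wpM2l; [exact: ltW | exact: diff_bd].
have j2 : inner (FF P phi dJ lam X Y astar - G astar) (a - astar) <= e * DD.
  apply: le_trans (CS _ _) _; apply: ler_pM; try exact: norm2_ge0.
    by rewrite norm2B; exact: ltW.
  exact: diff_bd.
have j3 : inner (FF P phi dJ lam X Y astar) (a' - a) <= FA * (sig * DD).
  apply: le_trans (CS _ _) _; apply: ler_wpM2l; first exact: norm2_ge0.
  rewrite a'a norm2Z gtr0_norm //; apply: ler_wpM2l; [exact: ltW | exact: diff_bd].
have FA0 : 0 <= FA := norm2_ge0 _.
have BG0 : 0 <= BG := le_trans (norm2_ge0 _) (Fn_bd w n0 asB).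
have DD0 := DD_ge0.
have j4 : FA * (sig * DD) <= FA * (tau * DD).
  by apply: ler_wpM2l => //; apply: ler_wpM2r.
have -> : e * C0 = BG * (tau * DD) + e * DD + FA * (tau * DD).
  by rewrite /C0 /tau; field; rewrite gt_eqF.
rewrite norm2_sq.
lra.
Qed.

Lemma main_sec : forall w : Omega,
    (exists nw, (0 < nw)%N /\ forall n, (nw < n)%N ->
       En P phi dJ h Rr lam X Y Xs Ys epsd alpha n w) ->
  forall Nb : set 'M[R]_(N, d), nbhs astar Nb ->
  exists Nw, (0 < Nw)%N /\ forall n, (Nw <= n)%N ->
    exists a,
      VI (Aprod (fun i => Awn phi h Rr Xs Ys i n w)) (Fn phi dJ lam Xs Ys n w) a
      /\ (forall b, VI (Aprod (fun i => Awn phi h Rr Xs Ys i n w))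
                       (Fn phi dJ lam Xs Ys n w) b -> b = a)
      /\ Nb a.
Proof using All.
move=> w [nw [nw0 HE]] Nb HNb.
have [eps eps0 Hball] := (nbhs_ballP _ _).1 HNb.
have BG0 : 0 <= BG := le_trans (norm2_ge0 _) (Fn_bd w (ltn0Sn 0) astar_ball).
have C00 := C0_ge0 BG0.
have [ep0 eph] := andP Hepsd.
have [al0 al1] := andP Halpha.
set delta := eps ^+ 2 * lam / (C0 + 1).
have C01 : 0 < C0 + 1 by rewrite ltr_wpDl.
have del0 : 0 < delta by rewrite divr_gt0 // mulr_gt0 // exprn_gt0.
set r := delta / epsd.
have r0 : 0 < r by rewrite divr_gt0.
set Lam := - ln r / alpha.
set K0 := Num.bound (expR Lam).
have HK0 : expR Lam < K0%:R by apply: archi_boundP; exact: expR_ge0.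
exists (nw + K0).+1; split => // n Hn.
have n0 : (0 < n)%N by apply: leq_trans Hn.
have Hnw : (nw < n)%N by apply: leq_trans Hn; rewrite ltnS leq_addr.
have HK : (K0 < n)%N by apply: leq_trans Hn; rewrite ltnS leq_addl.
have HEn := HE n Hnw.
have npos : 0 < n%:R :> R by rewrite ltr0n.
have pw : powR n%:R (- alpha) = expR (- alpha * ln n%:R).
  by rewrite /powR gt_eqF.
set e := en epsd alpha n.
have e0 : 0 < e by rewrite /e /en mulr_gt0 // powR_gt0.
have e_le : e <= epsd.
  rewrite /e /en ger_pMr //.
  rewrite -[X in _ <= X](powRr0 n%:R).
  have h1 : (1 : R) <= n%:R by rewrite ler1n.
  have h2 : - alpha <= 0 by rewrite oppr_le0 ltW.
  exact: (ler_powR h1 h2).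
have eh : e < epsh by apply: le_lt_trans eph.
have e_small : e < delta.
  have h1 : expR Lam < n%:R by apply: lt_trans HK0 _; rewrite ltr_nat.
  have h2 : Lam < ln n%:R.
    rewrite -[X in X < _]expRK ltr_ln // posrE; exact: expR_gt0.
  have h3 : - alpha * ln n%:R < ln r.
    have -> : ln r = - alpha * Lam by rewrite /Lam; field; rewrite gt_eqF.
    by rewrite !mulNr ltrN2 ltr_pM2l.
  have h4 : expR (- alpha * ln n%:R) < r by rewrite -[X in _ < X](lnK (x:=r)) ?posrE // ltr_expR.
  rewrite /e /en pw; move: h4; rewrite /r ltr_pdivlMr // => h4.
  by rewrite mulrC.
pose G := Fn phi dJ lam Xs Ys n w.
have Kne : Kn n w !=set0.
  exists smat; case: HEn => _ E2 _; apply: E2 => i; rewrite /Aeps row_smat.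
  case: (sf_A i) => h1 h2; split => //; apply: le_trans h2 _; rewrite lerN2; exact: ltW.
have Lp : 0 < `|LF| * Phi ^+ 2 + lam by rewrite ltr_wpDl // mulr_ge0 // sqr_ge0.
have [a Va] := @VI_exists _ _ _ (Kn n w) G (`|LF| * Phi ^+ 2 + lam) lam Kne
  (@Kn_closed n w n0) (@Kn_bounded n w) (@Kn_convex n w) Hlam Lp
  (fun a b Ka Kb => Fn_lip w n0 (Kn_sub Ka) (Kn_sub Kb))
  (fun a b Ka Kb => Fn_mono n w (Kn_sub Ka) (Kn_sub Kb)).
exists a; split; first exact: Va.
split.
  move=> b Vb; apply: (@VI_unique _ _ _ (Kn n w) G lam Hlam _ b a Vb Va).
  by move=> x y Kx Ky; apply: Fn_mono; apply: Kn_sub.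
apply: Hball; rewrite -ball_normE /=.
apply: le_lt_trans (mx_le_norm2 _) _; rewrite norm2B.
have k := key_est n0 HEn e0 eh Va.
rewrite -/e in k.
have k2 : e * C0 <= delta * C0 by apply: ler_wpM2r => //; exact: ltW.
have k3 : delta * C0 < eps ^+ 2 * lam.
  rewrite /delta mulrAC ltr_pdivrMr // ltr_pM2l ?ltrDl // mulr_gt0 // exprn_gt0 //.
have k4 : norm2 (a - astar) ^+ 2 < eps ^+ 2.
  have : lam * norm2 (a - astar) ^+ 2 < lam * eps ^+ 2 by rewrite mulrC [X in _ < X]mulrC; lra.
  by rewrite ltr_pM2l.
by rewrite -(ltr_pXn2r (n:=2)) ?nnegrE ?norm2_ge0 ?(ltW eps0).
Qed.

End Main.

Theorem theorem3 (R : realType) (dO : measure_display)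
  (Omega : measurableType dO) (P : probability Omega R)
  (N d nx ny : nat) (HN : (0 < N)%N) (Hd : (0 < d)%N)
  (Rr lam : R) (HR : 0 < Rr) (Hlam : 0 < lam)
  (Xset : set 'rV[R]_nx) (Yset : set 'rV[R]_ny)
  (HXc : compact Xset) (HYc : compact Yset)
  (X : 'I_nx -> Omega -> R) (Y : 'I_ny -> Omega -> R)
  (HXm : forall j, measurable_fun setT (X j))
  (HYm : forall j, measurable_fun setT (Y j))
  (HXv : forall w, Xset (vecof X w)) (HYv : forall w, Yset (vecof Y w))
  (phi : 'I_d -> 'rV[R]_nx -> R)
  (Hphi : forall l, {within Xset, continuous phi l})
  (J dJ : 'I_N -> 'rV[R]_N -> 'rV[R]_ny -> R)
  (h : 'I_N -> R -> 'rV[R]_ny -> R)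
  (* (A1) *)
  (HA1 : forall (i : 'I_N) (z : 'rV[R]_N) y, Yset y ->
     (forall t : R, is_derive t (1 : R) (fun s => J i (upd z i s) y) (dJ i (upd z i t) y))
     /\ continuous (fun t => dJ i (upd z i t) y))
  (* (A2) *)
  (LF Lh : R)
  (HA2F : forall y, Yset y -> forall z1 z2 : 'rV[R]_N,
     Zset phi Xset Rr z1 -> Zset phi Xset Rr z2 ->
     norm2 (Fz dJ z1 y - Fz dJ z2 y) <= LF * norm2 (z1 - z2))
  (HA2h : forall i y, Yset y -> forall t1 t2,
     Zi phi Xset Rr t1 -> Zi phi Xset Rr t2 ->
     `|h i t1 y - h i t2 y| <= Lh * `|t1 - t2|)
  (HA2b : exists z : 'rV[R]_N, Zset phi Xset Rr z /\ exists M : R, forall y, Yset y ->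
     norm2 (Fz dJ z y) <= M /\ forall i, `|h i (z 0 i) y| <= M)
  (* (A3) *)
  (HA3F : forall y, Yset y -> forall z1 z2 : 'rV[R]_N,
     Zset phi Xset Rr z1 -> Zset phi Xset Rr z2 ->
     0 <= inner (Fz dJ z1 y - Fz dJ z2 y) (z1 - z2))
  (HA3h : forall i y, Yset y -> convex_on (Zi phi Xset Rr) (fun t => h i t y))
  (* (A4) *)
  (epsh : R) (Hepsh : 0 < epsh)
  (HA4 : forall i, exists ai, Aeps P phi h Rr X Y i (- epsh) ai)
  (* measurability of the integrands (implicit in the paper) *)
  (Hmeas : forall a, clBallN Rr a ->
     (forall i l, measurable_fun setT
        (fun w => Fb dJ phi a (vecof X w) (vecof Y w) i l)) /\
     (forall i, measurable_fun setT
        (fun w => hb h phi i (row i a) (vecof X w) (vecof Y w))))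
  (* i.i.d. copies (X^k, Y^k), k = 0, 1, 2, ... *)
  (Xs : nat -> 'I_nx -> Omega -> R) (Ys : nat -> 'I_ny -> Omega -> R)
  (HXsm : forall k j, measurable_fun setT (Xs k j))
  (HYsm : forall k j, measurable_fun setT (Ys k j))
  (HXsv : forall k w, Xset (vecof (Xs k) w))
  (HYsv : forall k w, Yset (vecof (Ys k) w))
  (Hindep : indep_copies P Xs Ys)
  (Hlaw : forall k, same_law P X (Xs k) Y (Ys k))
  (* the constant eps_diamond *)
  (epsd : R) (Hepsd : 0 < epsd < epsh)
  (Hrate : forall a, clBallN Rr a ->
     (forall i l, rate_cond P epsd (fun w =>
        Fb dJ phi a (vecof X w) (vecof Y w) i l - FF0 P phi dJ X Y a i l)) /\
     (forall i, rate_cond P epsd (fun w =>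
        hb h phi i (row i a) (vecof X w) (vecof Y w)
        - hbar P phi h X Y i (row i a))))
  (alpha : R) (Halpha : 0 < alpha < 1 / 2)
  (* the solution of VI(A, \mathbb F) *)
  (astar : 'M[R]_(N, d))
  (Hstar : VI (Aprod (fun i => Aeps P phi h Rr X Y i 0))
              (FF P phi dJ lam X Y) astar) :
  forall w : Omega,
    (exists nw, (0 < nw)%N /\ forall n, (nw < n)%N ->
       En P phi dJ h Rr lam X Y Xs Ys epsd alpha n w) ->
  forall Nb : set 'M[R]_(N, d), nbhs astar Nb ->
  exists Nw, (0 < Nw)%N /\ forall n, (Nw <= n)%N ->
    exists a,
      VI (Aprod (fun i => Awn phi h Rr Xs Ys i n w)) (Fn phi dJ lam Xs Ys n w) a
      /\ (forall b, VI (Aprod (fun i => Awn phi h Rr Xs Ys i n w))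
                       (Fn phi dJ lam Xs Ys n w) b -> b = a)
      /\ Nb a.
Proof. exact (@main_sec R dO Omega P N d nx ny HN Hd Rr lam HR Hlam Xset Yset HXc HYc X Y HXm HYm HXv HYv phi Hphi J dJ h HA1 LF Lh HA2F HA2h HA2b HA3F HA3h epsh Hepsh HA4 Hmeas Xs Ys HXsm HYsm HXsv HYsv Hindep Hlaw epsd Hepsd Hrate alpha Halpha astar Hstar). Qed.
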